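(* Let $\mathcal P$ consist of exactly two propositional variables, let $\mathcal E=\mathcal L_{\mathcal P}^*/\!\equiv$ be the set of consistent formulas modulo logical equivalence, and let $B(\varphi)=\varphi$ for every $\varphi\in\mathcal E$. Let $\nabla$ be an ES basic fusion operator on this epistemic space whose representing basic assignment $\Phi\mapsto\succeq_\Phi$ satisfies the Maximality Condition. Then $\nabla$ does not satisfy (ESF-SD).
   Context: $\mathcal W_{\mathcal P}$ denotes valuations, $[\![\phi]\!]$ models, $\varphi_M$ a formula with models exactly $M$. Agents form a well-ordered set $\mathcal S$; a society is a nonempty finite $N\subseteq\mathcal S$; an $N$-profile is $\Phi:N\to\mathcal E$, $E_i=\Phi(i)$, identified with $E_i$ if $N=\{i\}$; profiles on $\{i_1<\dots<i_n\}$ and $\{j_1<\dots<j_m\}$ are equivalent if $n=m$ and entries coincide position-wise. An ES combination operator maps (profile, $E\in\mathcal E$) to $\nabla(\Phi,E)\in\mathcal E$; it is an ES basic fusion operator if (ESF1) $B(\nabla(\Phi,E))\vdash B(E)$; (ESF2) equivalent profiles and $B(E)\equiv B(E')$ give $B(\nabla(\Phi,E))\equiv B(\nabla(\Phi',E'))$; (ESF3) if $B(E)\equiv B(E')\wedge B(E'')$ then $B(\nabla(\Phi,E'))\wedge B(E'')\vdash B(\nabla(\Phi,E))$; (ESF4) if moreover $B(\nabla(\Phi,E'))\wedge B(E'')\nvdash\bot$ then $B(\nabla(\Phi,E))\vdash B(\nabla(\Phi,E'))\wedge B(E'')$. For such $\nabla$ there is a unique assignment $\Phi\mapsto\succeq_\Phi$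 (total preorders on $\mathcal W_{\mathcal P}$, equal on equivalent profiles) with $[\![B(\nabla(\Phi,E))]\!]=\max([\![B(E)]\!],\succeq_\Phi)$, where $\max(C,\succeq)=\{c\in C:c\succeq x\ \forall x\in C\}$. Maximality Condition: $[\![B(E_i)]\!]=\max(\succeq_{E_i})$ for every agent $i$ and $i$-profile $E_i$. (ESF-SD): for every agent $i$, every three interpretations $w,w',w''$ and every $E_{w,w'},E_{w',w''}$ with $[\![B(E_{w,w'})]\!]=\{w,w'\}$, $[\![B(E_{w',w''})]\!]=\{w',w''\}$, for each of the following four requirements there exists an $i$-profile $E_i$ meeting it: (i) $B(\nabla(E_i,E_{w,w'}))\equiv\varphi_{w,w'}$ and $B(\nabla(E_i,E_{w',w''}))\equiv\varphi_{w',w''}$; (ii) $\equiv\varphi_{w,w'}$ and $\equiv\varphi_{w'}$; (iii) $\equiv\varphi_w$ and $\equiv\varphi_{w',w''}$; (iv) $\equiv\varphi_w$ and $\equiv\varphi_{w'}$. *)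

(* Defs.v *)
From Stdlib Require Import Sorting.Sorted.
From HB Require Import structures.
From mathcomp Require Import all_boot.

Set Implicit Arguments.
Unset Strict Implicit.
Unset Printing Implicit Defensive.

(* P = {p, q}: a valuation is the pair (truth value of p, truth value of q). *)
Definition valuation : finType := (bool * bool)%type.

(* E = consistent formulas modulo logical equivalence: a class of formulas is
   identified with its (nonempty) set of models. *)
Definition estate := {A : {set valuation} | A != set0}.

(* [[B(e)]] with B the identity: the models of e. *)
Definition mods (e : estate) : {set valuation} := val e.

(* An N-profile for a society N = {i_1 < ... < i_n}: the list of pairs
   (i_k, E_{i_k}), strictly increasing in the agent order, nonempty. *)
Record profile (S : Type) (lt : S -> S -> Prop) := Profile {
  entries : seq (S * estate);
  entries_nonempty : entries <> [::];
  entries_sorted : Sorted (fun a b => lt a.1 b.1) entries }.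

Definition equiv_prof S lt (P1 P2 : @profile S lt) :=
  map snd (entries P1) = map snd (entries P2).

Lemma single_nonempty S (i : S) (e : estate) : [:: (i, e)] <> [::].
Proof. by []. Qed.

Lemma single_sorted S (lt : S -> S -> Prop) (i : S) (e : estate) :
  Sorted (fun a b => lt a.1 b.1) [:: (i, e)].
Proof. by constructor; constructor. Qed.

Definition single S (lt : S -> S -> Prop) (i : S) (e : estate) : profile lt :=
  Profile (@single_nonempty S i e) (@single_sorted S lt i e).

Section Fusion.
Variables (S : Type) (lt : S -> S -> Prop).
Variable nab : profile lt -> estate -> estate.

Definition ESF1 := forall P E, mods (nab P E) \subset mods E.
Definition ESF2 := forall P P' E E', equiv_prof P P' -> mods E = mods E' ->
  mods (nab P E) = mods (nab P' E').
Definition ESF3 := forall P E E' E'', mods E = mods E' :&: mods E'' ->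
  mods (nab P E') :&: mods E'' \subset mods (nab P E).
Definition ESF4 := forall P E E' E'', mods E = mods E' :&: mods E'' ->
  mods (nab P E') :&: mods E'' != set0 ->
  mods (nab P E) \subset mods (nab P E') :&: mods E''.
Definition ES_basic_fusion := [/\ ESF1, ESF2, ESF3 & ESF4].

(* x >= y read as  r x y *)
Definition total_preorder (r : rel valuation) := total r /\ transitive r.

Definition maxel (C : {set valuation}) (r : rel valuation) : {set valuation} :=
  [set c in C | [forall x in C, r c x]].

Definition represents (pref : profile lt -> rel valuation) :=
  [/\ forall P, total_preorder (pref P),
      forall P P', equiv_prof P P' -> pref P =2 pref P' &
      forall P E, mods (nab P E) = maxel (mods E) (pref P)].

Definition maximality (pref : profile lt -> rel valuation) :=
  forall (i : S) (e : estate), mods e = maxel setT (pref (single lt i e)).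

Definition ESF_SD :=
  forall (i : S) (w w' w'' : valuation),
    w != w' -> w' != w'' -> w != w'' ->
    forall E1 E2 : estate,
      mods E1 = [set w; w'] -> mods E2 = [set w'; w''] ->
      [/\ (exists e, mods (nab (single lt i e) E1) = [set w; w'] /\
                     mods (nab (single lt i e) E2) = [set w'; w'']),
          (exists e, mods (nab (single lt i e) E1) = [set w; w'] /\
                     mods (nab (single lt i e) E2) = [set w']),
          (exists e, mods (nab (single lt i e) E1) = [set w] /\
                     mods (nab (single lt i e) E2) = [set w'; w'']) &
          (exists e, mods (nab (single lt i e) E1) = [set w] /\
                     mods (nab (single lt i e) E2) = [set w'])].
End Fusion.

(* Main.v *)
Require Import Defs.
From HB Require Import structures.
From mathcomp Require Import all_boot.

Set Implicit Arguments.
Unset Strict Implicit.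
Unset Printing Implicit Defensive.

Definition va : valuation := (false, false).
Definition vb : valuation := (false, true).
Definition vc : valuation := (true, false).
Definition vd : valuation := (true, true).

Lemma ne2 (x y : valuation) : [set x; y] != set0.
Proof. by apply/set0Pn; exists x; rewrite !inE eqxx. Qed.

Definition Eab : estate := exist (fun A : {set valuation} => A != set0) _ (ne2 va vb).
Definition Eac : estate := exist (fun A : {set valuation} => A != set0) _ (ne2 va vc).
Definition Ebc : estate := exist (fun A : {set valuation} => A != set0) _ (ne2 vb vc).

Lemma in_maxel2 (r : rel valuation) x y : total r ->
  (x \in maxel [set x; y] r) = r x y.
Proof.
move=> tot; rewrite /maxel inE !inE eqxx /=.
apply/forallP/idP => [H | Hxy z].
- by have := H y; rewrite !inE eqxx orbT.
- apply/implyP; rewrite !inE => /orP[]/eqP->//.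
  by have := tot x x; rewrite orbb.
Qed.

Lemma in_maxel2r (r : rel valuation) x y : total r ->
  (y \in maxel [set x; y] r) = r y x.
Proof. by move=> tot; rewrite setUC in_maxel2. Qed.

Lemma eq_est (e1 e2 : estate) :
  (forall x, (x \in mods e1) = (x \in mods e2)) -> e1 = e2.
Proof. by move=> H; apply: val_inj; apply/setP. Qed.

Lemma est_ne (e : estate) : exists x, x \in mods e.
Proof. by case: e => A HA; have /set0Pn := HA. Qed.

Lemma all4 (P : valuation -> Prop) : P va -> P vb -> P vc -> P vd -> forall x, P x.
Proof. by move=> ? ? ? ? [[] []]. Qed.

Theorem theorem4 (S : Type) (lt : S -> S -> Prop)
  (lt_irrefl : forall x, ~ lt x x)
  (lt_trans : forall x y z, lt x y -> lt y z -> lt x z)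
  (lt_total : forall x y, x = y \/ lt x y \/ lt y x)
  (lt_wf : well_founded lt)
  (s0 : S)
  (nab : profile lt -> estate -> estate) :
  ES_basic_fusion nab ->
  (exists pref, represents nab pref /\ maximality pref) ->
  ~ ESF_SD nab.
Proof.
move=> _ [pref [[Htot _ Hrep] Hmax]] Hsd.
pose r e := pref (single lt s0 e).
have tot e : total (r e) by case: (Htot (single lt s0 e)).
have tr e : transitive (r e) by case: (Htot (single lt s0 e)).
have P1 e x y (E : estate) : mods E = [set x; y] -> x != y ->
    mods (nab (single lt s0 e) E) = [set x] -> r e x y /\ ~~ r e y x.
  move=> HE nxy H; have := Hrep (single lt s0 e) E; rewrite H HE => H'.
  split.
  - by rewrite -(in_maxel2 _ y (tot e)) -H' inE.
  - by rewrite -(in_maxel2r x _ (tot e)) -H' inE eq_sym.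
have P2 e x y (E : estate) : mods E = [set x; y] ->
    mods (nab (single lt s0 e) E) = [set x; y] -> r e x y /\ r e y x.
  move=> HE H; have := Hrep (single lt s0 e) E; rewrite H HE => H'.
  split.
  - by rewrite -(in_maxel2 _ y (tot e)) -H' !inE eqxx.
  - by rewrite -(in_maxel2r x _ (tot e)) -H' !inE eqxx orbT.
have top e y z : y \in mods e -> r e y z.
  move=> Hy; move: Hy; rewrite (Hmax s0 e) inE => /andP[_ /forallP H].
  by have := H z; rewrite inE.
pose Top x y z e := ~~ r e y x && ~~ r e z x.
have Topnot x y z e : Top x y z e -> (y \notin mods e) && (z \notin mods e).
  move=> /andP[H1 H2]; apply/andP; split; apply/negP => /top Hc.
    by rewrite Hc in H1.
  by rewrite Hc in H2.
have group x y z (Exy Exz Eyz : estate) :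
    x != y -> y != z -> x != z ->
    mods Exy = [set x; y] -> mods Exz = [set x; z] -> mods Eyz = [set y; z] ->
    (forall v, v = x \/ v = y \/ v = z \/ v = vd) ->
    exists e, Top x y z e /\ x \notin mods e.
  move=> nxy nyz nxz mxy mxz myz cover.
  have myz' : mods Eyz = [set z; y] by rewrite setUC.
  have [_ _ [e1 [h11 h12]] [e2 [h21 h22]]] := Hsd s0 x y z nxy nyz nxz Exy Eyz mxy myz.
  have [_ _ _ [e3 [h31 h32]]] :=
    Hsd s0 x z y nxz (contra_neq (@esym _ _ _) nyz) nxy Exz Eyz mxz myz'.
  have T1 : Top x y z e1.
    have [a1 a2] := P1 _ _ _ _ mxy nxy h11; have [a3 a4] := P2 _ _ _ _ myz h12.
    rewrite /Top a2 /=; apply/negP => H; move/negP: a2; apply.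
    exact: tr a3 H.
  have T2 : Top x y z e2.
    have [a1 a2] := P1 _ _ _ _ mxy nxy h21.
    have [a3 a4] := P1 _ _ _ _ myz nyz h22.
    rewrite /Top a2 /=; apply/negP => H; move/negP: a4; apply.
    exact: tr H a1.
  have T3 : Top x y z e3.
    have [a1 a2] := P1 _ _ _ _ mxz nxz h31.
    have [a3 a4] := P1 _ _ _ _ myz' (contra_neq (@esym _ _ _) nyz) h32.
    rewrite /Top a2 andbT; apply/negP => H; move/negP: a4; apply.
    exact: tr H a1.
  have n12 : e1 <> e2.
    move=> E; move: h22; rewrite -E h12 => /setP/(_ z).
    by rewrite !inE eqxx orbT eq_sym (negbTE nyz).
  have n13 : e1 <> e3.
    move=> E; move: h32; rewrite -E h12 => /setP/(_ y).
    by rewrite !inE eqxx (negbTE nyz).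
  have n23 : e2 <> e3.
    move=> E; move: h32; rewrite -E h22 => /setP/(_ y).
    by rewrite !inE eqxx (negbTE nyz).
  have det (f g : estate) : Top x y z f -> Top x y z g ->
      (x \in mods f) = (x \in mods g) -> (vd \in mods f) = (vd \in mods g) ->
      f = g.
    move=> Tf Tg hx hd; apply: eq_est => w.
    have /andP[fy fz] := Topnot _ _ _ _ Tf.
    have /andP[gy gz] := Topnot _ _ _ _ Tg.
    by case: (cover w) => [->|[->|[->|->]]] //;
      rewrite ?(negbTE fy) ?(negbTE gy) ?(negbTE fz) ?(negbTE gz).
  case X1: (x \in mods e1); last by exists e1; rewrite X1.
  case X2: (x \in mods e2); last by exists e2; rewrite X2.
  case X3: (x \in mods e3); last by exists e3; rewrite X3.
  exfalso.
  case D1: (vd \in mods e1); case D2: (vd \in mods e2); case D3: (vd \in mods e3);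
  first [ apply: n12; apply: det; by rewrite ?X1 ?X2 ?D1 ?D2
        | apply: n13; apply: det; by rewrite ?X1 ?X3 ?D1 ?D3
        | apply: n23; apply: det; by rewrite ?X2 ?X3 ?D2 ?D3 ].
have [ea [Ta na]] := group va vb vc Eab Eac Ebc erefl erefl erefl erefl erefl erefl
  (ltac:(by case=> [[] []]; auto)).
have mba : mods Eab = [set vb; va] by rewrite setUC.
have [eb [Tb nb]] := group vb va vc Eab Ebc Eac erefl erefl erefl mba erefl erefl
  (ltac:(by case=> [[] []]; auto)).
have /andP[ab ac] := Topnot _ _ _ _ Ta.
have /andP[ba bc] := Topnot _ _ _ _ Tb.
have Eq : ea = eb.
  have [w hw] := est_ne ea; have [w' hw'] := est_ne eb.
  have hd1 : vd \in mods ea.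
    by move: hw; case: w => [[] []] //; rewrite ?(negbTE na) ?(negbTE ab) ?(negbTE ac).
  have hd2 : vd \in mods eb.
    by move: hw'; case: w' => [[] []] //; rewrite ?(negbTE nb) ?(negbTE ba) ?(negbTE bc).
  apply: eq_est; apply: all4;
    by rewrite ?(negbTE na) ?(negbTE ab) ?(negbTE ac) ?(negbTE nb) ?(negbTE ba) ?(negbTE bc) ?hd1 ?hd2.
subst eb; move: Ta Tb => /andP[h _] /andP[h' _].
by have := tot ea va vb; rewrite (negbTE h) (negbTE h').
Qed.
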